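(* Let $n\ge3$ and let $l$ be the largest SIA index among all $n\times n$ SIA matrices. Among the sets $\mathcal S_1,\mathcal S_2,\ldots,\mathcal S_l$, the set $\mathcal S_1$ is the only one that is closed under matrix multiplication (i.e., $P,Q\in\mathcal S_k\Rightarrow PQ\in\mathcal S_k$ holds for $k=1$ and fails for every $2\le k\le l$).
   Context: Let $\mathcal N=\{1,\ldots,n\}$. A matrix is stochastic if it is entrywise nonnegative with row sums $1$. For stochastic $P$ and $\mathcal A\subseteq\mathcal N$, $F_P(\mathcal A)=\{j:\ p_{ij}>0\text{ for some } i\in\mathcal A\}$, $F_P^1=F_P$, $F_P^k(\mathcal A)=F_P(F_P^{k-1}(\mathcal A))$. $P$ is SIA if $\lim_{m\to\infty}P^m=\mathbf 1c^T$ for some nonnegative $c$ with entries summing to $1$. For an SIA matrix $P$ and each unordered pair of disjoint nonempty sets $\mathcal A,\tilde{\mathcal A}\subseteq\mathcal N$, let $s(\mathcal A,\tilde{\mathcal A})$ be the smallest integer $k\ge1$ such that either (i) $F_P^k(\mathcal A)\cap F_P^k(\tilde{\mathcal A})\ne\emptyset$, or (ii) $F_P^k(\mathcal A)\cap F_P^k(\tilde{\mathcal A})=\emptyset$ and $|F_P^k(\mathcal A)\cup F_P^k(\tilde{\mathcal A})|>|\mathcal A\cup\tilde{\mathcal A}|$. The SIA index of $P$ is the maximum of $s(\mathcal A,\tilde{\mathcal A})$ over all such pairs (it is at most $n(n-1)/2$). $\mathcal V_k$ is the set of $n\times n$ SIA matrices with SIA index exactly $k$, and $\mathcal S_k=\bigcup_{r=1}^k\mathcal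 V_r$. The set $\mathcal S_1$ coincides with the class of stochastic Sarymsakov matrices: stochastic $P$ such that for any disjoint nonempty $\mathcal A,\tilde{\mathcal A}\subseteq\mathcal N$, either $F_P(\mathcal A)\cap F_P(\tilde{\mathcal A})\neq\emptyset$, or $F_P(\mathcal A)\cap F_P(\tilde{\mathcal A})=\emptyset$ and $|F_P(\mathcal A)\cup F_P(\tilde{\mathcal A})|>|\mathcal A\cup\tilde{\mathcal A}|$. *)

(* Defs.v *)
From mathcomp Require Import all_boot.
From Stdlib Require Import Reals.

Set Implicit Arguments.
Unset Strict Implicit.
Unset Printing Implicit Defensive.

Definition rmat (n : nat) := 'I_n -> 'I_n -> R.

Definition rsum (n : nat) (f : 'I_n -> R) : R := \big[Rplus/0%R]_(k < n) f k.

Definition mmul (n : nat) (P Q : rmat n) : rmat n :=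
  fun i j => rsum (fun k => Rmult (P i k) (Q k j)).

Definition mid (n : nat) : rmat n :=
  fun i j => if i == j then 1%R else 0%R.

Fixpoint mpow (n : nat) (P : rmat n) (m : nat) : rmat n :=
  match m with
  | 0 => @mid n
  | m'.+1 => mmul (mpow P m') P
  end.

Definition stochastic (n : nat) (P : rmat n) : Prop :=
  (forall i j, Rle 0 (P i j)) /\ (forall i, rsum (fun j => P i j) = 1%R).

Definition SIA (n : nat) (P : rmat n) : Prop :=
  stochastic P /\
  exists c : 'I_n -> R,
    (forall j, Rle 0 (c j)) /\ rsum c = 1%R /\
    (forall i j, Un_cv (fun m => mpow P m i j) (c j)).

Definition posb (x : R) : bool := if Rlt_dec 0 x then true else false.

Definition Fset (n : nat) (P : rmat n) (A : {set 'I_n}) : {set 'I_n} :=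
  [set j | [exists i in A, posb (P i j)]].

Definition Fk (n : nat) (P : rmat n) (k : nat) (A : {set 'I_n}) : {set 'I_n} :=
  iter k (Fset P) A.

Definition sia_cond (n : nat) (P : rmat n) (A B : {set 'I_n}) (k : nat) : bool :=
  (Fk P k A :&: Fk P k B != set0)
  || ((Fk P k A :&: Fk P k B == set0)
      && (#|A :|: B| < #|Fk P k A :|: Fk P k B|)).

Definition is_s (n : nat) (P : rmat n) (A B : {set 'I_n}) (s : nat) : Prop :=
  1 <= s /\ sia_cond P A B s /\ (forall k, 1 <= k -> k < s -> ~~ sia_cond P A B k).

Definition admissible_pair (n : nat) (A B : {set 'I_n}) : Prop :=
  A != set0 /\ B != set0 /\ [disjoint A & B].

Definition sia_index (n : nat) (P : rmat n) (k : nat) : Prop :=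
  (exists A B, admissible_pair A B /\ is_s P A B k) /\
  (forall A B s, admissible_pair A B -> is_s P A B s -> s <= k).

Definition Vk (n k : nat) (P : rmat n) : Prop := SIA P /\ sia_index P k.

Definition Sk (n k : nat) (P : rmat n) : Prop :=
  exists r, 1 <= r /\ r <= k /\ Vk r P.

Definition mul_closed (n : nat) (S : rmat n -> Prop) : Prop :=
  forall P Q, S P -> S Q -> S (mmul P Q).

Definition largest_sia_index (n l : nat) : Prop :=
  (exists P : rmat n, Vk l P) /\ (forall (P : rmat n) r, Vk r P -> r <= l).

(* Main.v *)
Require Import Defs.
From HB Require Import structures.
From mathcomp Require Import all_boot.
From Stdlib Require Import Reals Lra Lia FunctionalExtensionality Classical.

Set Implicit Arguments.
Unset Strict Implicit.
Unset Printing Implicit Defensive.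

Local Open Scope R_scope.

HB.instance Definition _ := Monoid.isComLaw.Build R 0 Rplus (fun a b c => esym (Rplus_assoc a b c)) Rplus_comm Rplus_0_l.
HB.instance Definition _ := Monoid.isMulLaw.Build R 0 Rmult Rmult_0_l Rmult_0_r.
HB.instance Definition _ := Monoid.isAddLaw.Build R Rmult Rplus Rmult_plus_distr_r Rmult_plus_distr_l.

Section Sums.
Variable n : nat.
Implicit Types f g : 'I_n -> R.

Lemma rsum_ge0 f : (forall k, 0 <= f k) -> 0 <= rsum f.
Proof. move=> H; rewrite /rsum; apply: big_ind => //; [lra| move=> *; lra]. Qed.

Lemma rsum_le f g : (forall k, f k <= g k) -> rsum f <= rsum g.
Proof. move=> H; rewrite /rsum; apply: (big_ind2 (fun x y => x <= y)) => //; [lra| move=> *; lra]. Qed.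

Lemma rsum_plus f g : rsum (fun k => f k + g k) = rsum f + rsum g.
Proof. by rewrite /rsum big_split. Qed.

Lemma rsum_scal a f : a * rsum f = rsum (fun k => a * f k).
Proof. by rewrite /rsum big_distrr. Qed.

Lemma rsum_ext f g : (forall k, f k = g k) -> rsum f = rsum g.
Proof. by move=> H; rewrite /rsum; apply: eq_bigr. Qed.

Lemma rsum_D1 f k : rsum f = f k + \big[Rplus/0]_(j < n | j != k) f j.
Proof. by rewrite /rsum (bigD1 k). Qed.

Lemma rsum_term_le f k : (forall j, 0 <= f j) -> f k <= rsum f.
Proof.
move=> H; rewrite (rsum_D1 f k).
have: 0 <= \big[Rplus/0]_(j < n | j != k) f j.
  by apply: big_ind => //; [lra | move=> *; lra].
lra.
Qed.

Lemma rsum_zero f : (forall k, f k = 0) -> rsum f = 0.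
Proof. by move=> H; rewrite /rsum big1. Qed.

Lemma rsum_pos f : (forall j, 0 <= f j) -> 0 < rsum f -> exists k, 0 < f k.
Proof.
move=> H Hp; apply: NNPP => Hn.
have : rsum f = 0.
  apply: rsum_zero => k; have := H k.
  have : ~ 0 < f k by move=> h; apply: Hn; exists k.
  lra.
lra.
Qed.

Lemma rsum_delta (k : 'I_n) a : rsum (fun j : 'I_n => if k == j then a else 0) = a.
Proof.
rewrite (rsum_D1 _ k) eqxx big1; first lra.
by move=> j; rewrite eq_sym => /negbTE ->.
Qed.

Lemma rsum_exchange (F : 'I_n -> 'I_n -> R) :
  rsum (fun i => rsum (fun j => F i j)) = rsum (fun j => rsum (fun i => F i j)).
Proof. by rewrite /rsum exchange_big. Qed.

End Sums.
Section Mat.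
Variable n : nat.
Implicit Types P Q T : rmat n.

Lemma mmul_assoc P Q T i j : mmul (mmul P Q) T i j = mmul P (mmul Q T) i j.
Proof.
rewrite /mmul.
transitivity (rsum (fun k => rsum (fun l => P i l * Q l k * T k j))).
  apply: rsum_ext => k; rewrite Rmult_comm rsum_scal; apply: rsum_ext => l; lra.
rewrite rsum_exchange; apply: rsum_ext => l.
rewrite rsum_scal; apply: rsum_ext => k; lra.
Qed.

Lemma mmul_ext P P' Q Q' : (forall i j, P i j = P' i j) -> (forall i j, Q i j = Q' i j) ->
  forall i j, mmul P Q i j = mmul P' Q' i j.
Proof. by move=> H1 H2 i j; apply: rsum_ext => k; rewrite H1 H2. Qed.

Lemma mmul_id_l P i j : mmul (@mid n) P i j = P i j.
Proof.
rewrite /mmul /mid.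
rewrite (rsum_ext (g := fun k => if i == k then P i j else 0)); first by rewrite rsum_delta.
by move=> k; case: eqP => [->|_]; lra.
Qed.

Lemma mpow_add P a b i j : mpow P (a + b) i j = mmul (mpow P a) (mpow P b) i j.
Proof.
elim: b i j => [|b IH] i j.
  rewrite addn0 /= /mmul /mid.
  rewrite (rsum_ext (g := fun k => if j == k then mpow P a i j else 0)); first by rewrite rsum_delta.
  by move=> k; rewrite (eq_sym j); case: eqP => [->|_]; lra.
rewrite addnS /=.
rewrite (mmul_ext (P' := mmul (mpow P a) (mpow P b)) (Q' := P)) //.
by rewrite mmul_assoc.
Qed.

Lemma mpow_succ_l P m i j : mpow P m.+1 i j = mmul P (mpow P m) i j.
Proof.
rewrite -add1n mpow_add; apply: mmul_ext => // i' j'.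
by rewrite /= mmul_id_l.
Qed.

Lemma stoch_mmul P Q : stochastic P -> stochastic Q -> stochastic (mmul P Q).
Proof.
move=> [P0 P1] [Q0 Q1]; split.
  by move=> i j; apply: rsum_ge0 => k; apply: Rmult_le_pos.
move=> i; rewrite /mmul rsum_exchange -(P1 i); apply: rsum_ext => k.
by rewrite -rsum_scal Q1 Rmult_1_r.
Qed.

Lemma stoch_mid : stochastic (@mid n).
Proof.
split; first by move=> i j; rewrite /mid; case: eqP => _; lra.
by move=> i; rewrite /mid rsum_delta.
Qed.

Lemma stoch_mpow P m : stochastic P -> stochastic (mpow P m).
Proof. by move=> HP; elim: m => [|m IH] /=; [apply: stoch_mid | apply: stoch_mmul]. Qed.

Lemma stoch_le1 P i j : stochastic P -> P i j <= 1.
Proof. move=> [P0 P1]; have := @rsum_term_le n (fun j => P i j) j (P0 i); by rewrite P1. Qed.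

Lemma posbP x : posb x = true <-> 0 < x.
Proof. by rewrite /posb; case: Rlt_dec => h; split. Qed.

Lemma mmul_posP P Q i j : (forall i j, 0 <= P i j) -> (forall i j, 0 <= Q i j) ->
  0 < mmul P Q i j <-> exists k, 0 < P i k /\ 0 < Q k j.
Proof.
move=> P0 Q0; split.
  move=> /rsum_pos [] => [k|k Hk]; first by apply: Rmult_le_pos.
  exists k; have := P0 i k; have := Q0 k j; move: Hk.
  move=> Hk h1 h2; split.
    case: h2 => // h2; rewrite -h2 Rmult_0_l in Hk; lra.
  case: h1 => // h1; rewrite -h1 Rmult_0_r in Hk; lra.
move=> [k [h1 h2]].
have := @rsum_term_le n (fun k => P i k * Q k j) k (fun l => Rmult_le_pos _ _ (P0 i l) (Q0 l j)).
have := Rmult_lt_0_compat _ _ h1 h2; rewrite /mmul /=; lra.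
Qed.

Lemma in_Fset P A j : (j \in Fset P A) = [exists i in A, posb (P i j)].
Proof. by rewrite /Fset inE. Qed.

Lemma Fset_mmul P Q A : (forall i j, 0 <= P i j) -> (forall i j, 0 <= Q i j) ->
  Fset (mmul P Q) A = Fset Q (Fset P A).
Proof.
move=> P0 Q0; apply/setP => j; rewrite !in_Fset.
apply/existsP/existsP.
  move=> [i /andP [iA /posbP /(mmul_posP _ _ P0 Q0) [k [h1 h2]]]].
  exists k; rewrite in_Fset; apply/andP; split; last by apply/posbP.
  by apply/existsP; exists i; rewrite iA; apply/posbP.
move=> [k /andP [kF /posbP h2]]; move: kF; rewrite in_Fset => /existsP [i /andP [iA /posbP h1]].
exists i; rewrite iA /=; apply/posbP; apply/(mmul_posP _ _ P0 Q0); by exists k.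
Qed.

Lemma Fk_mpow P m A : (forall i j, 0 <= P i j) ->
  Fk P m A = [set j | [exists i in A, posb (mpow P m i j)]].
Proof.
move=> P0; elim: m => [|m IH].
  apply/setP => j; rewrite inE /= /mid; apply/idP/existsP.
    by move=> jA; exists j; rewrite jA eqxx; apply/posbP; lra.
  by move=> [i /andP [iA]]; case: eqP => [<- //|_] /posbP; lra.
have Pm0 : forall m i j, 0 <= mpow P m i j.
  move=> m' i j; elim: m' i j => [|m' IH'] i j /=; first by rewrite /mid; case: eqP=>_; lra.
  by apply: rsum_ge0 => k; apply: Rmult_le_pos.
rewrite /Fk iterS -/(Fk P m A) IH.
apply/setP => j; rewrite in_Fset inE; apply/existsP/existsP.
  move=> [k /andP []]; rewrite inE => /existsP [i /andP [iA /posbP h1]] /posbP h2.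
  exists i; rewrite iA; apply/posbP => /=; apply/(mmul_posP _ _ (Pm0 m) P0); by exists k.
move=> [i /andP [iA /posbP /(mmul_posP _ _ (Pm0 m) P0) [k [h1 h2]]]].
exists k; rewrite inE; apply/andP; split; last by apply/posbP.
by apply/existsP; exists i; rewrite iA; apply/posbP.
Qed.

End Mat.
Section FunMat.
Variable n : nat.
Implicit Types f g h : 'I_n -> 'I_n.

Definition fm f : rmat n := fun i j => if f i == j then 1 else 0.

Lemma stoch_fm f : stochastic (fm f).
Proof.
split; first by move=> i j; rewrite /fm; case: eqP => _; lra.
by move=> i; rewrite /fm rsum_delta.
Qed.

Lemma mmul_fm f g : mmul (fm f) (fm g) = fm (g \o f).
Proof.
apply: functional_extensionality => i; apply: functional_extensionality => j.
rewrite /mmul /fm.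
rewrite (rsum_ext (g := fun k => if f i == k then (if g (f i) == j then 1 else 0) else 0)).
  by rewrite rsum_delta.
by move=> k; case: eqP => [<-|_]; lra.
Qed.

Lemma mpow_fm f m i j : mpow (fm f) m i j = fm (iter m f) i j.
Proof.
elim: m i j => [|m IH] i j /=; first by [].
rewrite (mmul_ext (P' := fm (iter m f)) (Q' := fm f)) //.
by rewrite mmul_fm.
Qed.

Lemma Fset_fm f A : Fset (fm f) A = f @: A.
Proof.
apply/setP => j; rewrite in_Fset; apply/existsP/imsetP.
  move=> [i /andP [iA /posbP]]; rewrite /fm; case: eqP => [<- _|_]; last lra.
  by exists i.
move=> [i iA ->]; exists i; rewrite iA; apply/posbP; rewrite /fm eqxx; lra.
Qed.

Lemma Fk_fm f m A : Fk (fm f) m A = iter m f @: A.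
Proof.
elim: m => [|m IH].
  by rewrite /= imset_id.
rewrite /Fk iterS -/(Fk (fm f) m A) IH Fset_fm -imset_comp.
by apply: eq_imset.
Qed.

Lemma V2_fm f c a b : (forall x, f (f x) = c) -> f a != f b -> Vk 2 (fm f).
Proof.
move=> Hc Hab.
have ab : a != b by apply: contra Hab => /eqP ->.
have F2 : forall A, A != set0 -> c \in Fk (fm f) 2 A.
  move=> A /set0Pn [x xA]; rewrite Fk_fm; apply/imsetP; exists x => //.
  by rewrite /= Hc.
have C2 : forall A B, admissible_pair A B -> sia_cond (fm f) A B 2.
  move=> A B [nA [nB _]]; rewrite /sia_cond; apply/orP; left.
  by apply/set0Pn; exists c; rewrite inE !F2.
split.
  split; first by apply: stoch_fm.
  exists (fun j => if c == j then 1 else 0); split; first by move=> j; case: eqP => _; lra.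
  split; first by rewrite rsum_delta.
  move=> i j e He; exists 2%nat => m Hm.
  rewrite mpow_fm /fm.
  have -> : iter m f i = c.
    case: m Hm => [|[|m]] Hm; [lia|lia|by rewrite /= Hc].
  rewrite /Rdist; case: eqP => _; rewrite Rminus_diag Rabs_R0; lra.
split.
  have adm : admissible_pair [set a] [set b].
    split; first by apply/set0Pn; exists a; rewrite inE.
    split; first by apply/set0Pn; exists b; rewrite inE.
    by rewrite disjoints1 inE.
  exists [set a], [set b]; split => //.
  split => //; split; first by apply: C2.
  move=> k k1 k2; have -> : k = 1%nat by apply/eqP; rewrite eqn_leq -ltnS k2 k1.
  rewrite /sia_cond !Fk_fm !imset_set1 /=.
  have -> : [set f a] :&: [set f b] = set0.
    by apply/setP => x; rewrite !inE; apply/negP => /andP [/eqP -> /eqP]; apply/eqP.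
  rewrite eqxx /= !cardsU1 !cards1 !inE Hab ab.
  by [].
move=> A B s Hadm [s1 [Hs Hmin]].
rewrite leqNgt; apply/negP => s2.
by move: (Hmin 2%nat isT s2); rewrite C2.
Qed.

Lemma notSIA_fm h a : h (h a) = a -> h a != a -> ~ SIA (fm h).
Proof.
move=> Hh Ha [_ [c [_ [_ Hcv]]]].
have ev : forall k, iter (k.*2) h a = a /\ iter (k.*2).+1 h a = h a.
  elim => [|k [IH1 IH2]] //=; rewrite IH1 Hh; split => //.
have [N HN] := Hcv a a (1/2) ltac:(lra).
have H1 := HN (N.*2) ltac:(apply/leP; rewrite -addnn; apply: leq_addr).
have H2 := HN (N.*2).+1 ltac:(apply/leP; rewrite -addnn; apply: leqW; apply: leq_addr).
rewrite /Rdist !mpow_fm /fm in H1 H2.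
have [e1 e2] := ev N.
rewrite e1 eqxx e2 (negbTE Ha) in H1 H2.
move: H1 H2; rewrite /Rabs; do 2 case: Rcase_abs; lra.
Qed.

End FunMat.
Section Sary.
Variable n : nat.
Implicit Types P Q : rmat n.

Definition sary P := forall A B, admissible_pair A B -> sia_cond P A B 1.

Lemma Fset_nonempty P (A : {set 'I_n}) : stochastic P -> A != set0 -> Fset P A != set0.
Proof.
move=> [P0 P1] /set0Pn [i iA].
have [k Hk] : exists k, 0 < P i k by apply: rsum_pos => //; rewrite P1; lra.
apply/set0Pn; exists k; rewrite in_Fset; apply/existsP; exists i; rewrite iA; exact/posbP.
Qed.

Lemma Fset_sub P (A B : {set 'I_n}) : A \subset B -> Fset P A \subset Fset P B.
Proof.
move=> /subsetP sAB; apply/subsetP => j; rewrite !in_Fset => /existsP [i /andP [iA h]].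
by apply/existsP; exists i; rewrite sAB.
Qed.

Lemma Fset_meet P (A B : {set 'I_n}) : stochastic P -> A :&: B != set0 -> Fset P A :&: Fset P B != set0.
Proof.
move=> HP /(Fset_nonempty HP) /set0Pn [j jF]; apply/set0Pn; exists j.
by rewrite inE !(subsetP (Fset_sub P _) j jF) // ?subsetIl ?subsetIr.
Qed.

Lemma sia_cond1 P (A B : {set 'I_n}) : sia_cond P A B 1 =
  (Fset P A :&: Fset P B != set0) ||
  ((Fset P A :&: Fset P B == set0) && (leq (#|A :|: B|).+1 #|Fset P A :|: Fset P B|)).
Proof. by []. Qed.

Lemma sary_mul P Q : stochastic P -> stochastic Q -> sary P -> sary Q -> sary (mmul P Q).
Proof.
move=> HP HQ SP SQ A B adm.
have P0 := HP.1; have Q0 := HQ.1.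
rewrite sia_cond1 !Fset_mmul //.
have := SP A B adm; rewrite sia_cond1 => /orP [HI|/andP [/eqP HI Hc]].
  by rewrite Fset_meet.
case: adm => [nA [nB _]].
have adm' : admissible_pair (Fset P A) (Fset P B).
  split; first exact: Fset_nonempty.
  split; first exact: Fset_nonempty.
  by rewrite -setI_eq0 HI.
have := SQ _ _ adm'; rewrite sia_cond1 => /orP [HI'|/andP [HI' Hc']].
  by rewrite HI'.
apply/orP; right; by rewrite HI' (ltn_trans Hc Hc').
Qed.

Lemma Vk1_sary P : Vk 1 P -> sary P.
Proof.
move=> [[HP [c [c0 [c1 Hcv]]]] [_ Hmax]] A B adm.
have P0 := HP.1.
have [j cj] : exists j, 0 < c j by apply: rsum_pos => //; rewrite c1; lra.
have [_ [_ _]] := adm.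
case: (adm) => /set0Pn [a aA] [/set0Pn [b bB] _].
have [Na Ha] := Hcv a j (c j) cj.
have [Nb Hb] := Hcv b j (c j) cj.
set m := maxn (maxn Na Nb) 1.
have pos : forall i N, (forall m, (m >= N)%coq_nat -> Rdist (mpow P m i j) (c j) < c j) ->
    (N <= m)%nat -> 0 < mpow P m i j.
  move=> i N H Nm; have := H m (leP Nm); rewrite /Rdist /Rabs; case: Rcase_abs; lra.
have jA : j \in Fk P m A.
  rewrite Fk_mpow // inE; apply/existsP; exists a; rewrite aA; apply/posbP.
  by apply: (pos a Na Ha); rewrite /m leq_max leq_maxl.
have jB : j \in Fk P m B.
  rewrite Fk_mpow // inE; apply/existsP; exists b; rewrite bB; apply/posbP.
  by apply: (pos b Nb Hb); rewrite /m leq_max leq_maxr.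
have cm : (0 < m)%nat && sia_cond P A B m.
  rewrite /m leq_max orbT /=; rewrite /sia_cond; apply/orP; left.
  by apply/set0Pn; exists j; rewrite inE jA jB.
have ex : exists k, (0 < k)%nat && sia_cond P A B k by exists m.
case: (ex_minnP ex) => s /andP [s0 cs] smin.
have iss : is_s P A B s.
  split => //; split => // k k0 ks; apply/negP => ck.
  by have := smin k; rewrite k0 ck => /(_ isT); rewrite leqNgt ks.
have := Hmax A B s adm iss => s1.
by have -> : 1%nat = s by apply/eqP; rewrite eqn_leq s0 s1.
Qed.

Lemma sary_index1 P (a b : 'I_n) : a != b -> sary P -> sia_index P 1.
Proof.
move=> ab SP; split.
  have adm : admissible_pair [set a] [set b].
    split; first by apply/set0Pn; exists a; rewrite inE.
    split; first by apply/set0Pn; exists b; rewrite inE.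
    by rewrite disjoints1 inE.
  exists [set a], [set b]; split => //; split => //; split; first exact: SP.
  by move=> k k0; rewrite ltnNge k0.
move=> A B s adm [s0 [cs smin]]; rewrite leqNgt; apply/negP => s1.
by move: (smin 1%nat isT s1); rewrite SP.
Qed.

Lemma Fk_nonempty P m (A : {set 'I_n}) : stochastic P -> A != set0 -> Fk P m A != set0.
Proof. by move=> HP nA; elim: m => [|m IH] //=; apply: Fset_nonempty. Qed.

Lemma sary_scr P : stochastic P -> sary P -> forall i i', exists k,
  0 < mpow P n i k /\ 0 < mpow P n i' k.
Proof.
move=> HP SP i i'.
have P0 := HP.1.
case: (eqVneq i i') => [<-|ii].
  have [Pn0 Pn1] := stoch_mpow n HP.
  have [k Hk] : exists k, 0 < mpow P n i k by apply: rsum_pos => //; rewrite Pn1; lra.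
  by exists k.
have key : forall m, (Fk P m [set i] :&: Fk P m [set i'] != set0) \/
   ((Fk P m [set i] :&: Fk P m [set i'] == set0) /\ (m.+2 <= #|Fk P m [set i] :|: Fk P m [set i']|)%nat).
  elim => [|m IH].
    right; rewrite /= cardsU1 cards1 inE ii /=; split => //.
    by rewrite setI_eq0 disjoints1 inE.
  have nA : Fk P m [set i] != set0 by apply: Fk_nonempty => //; apply/set0Pn; exists i; rewrite inE.
  have nB : Fk P m [set i'] != set0 by apply: Fk_nonempty => //; apply/set0Pn; exists i'; rewrite inE.
  case: IH => [HI|[HI Hc]].
    by left; rewrite /Fk !iterS; apply: Fset_meet.
  have adm : admissible_pair (Fk P m [set i]) (Fk P m [set i']).
    by split => //; split => //; rewrite -setI_eq0.
  have := SP _ _ adm; rewrite sia_cond1 => /orP [H|/andP [H1 H2]].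
    by left; rewrite /Fk !iterS.
  by right; rewrite /Fk !iterS; split => //; apply: leq_trans H2.
case: (key n) => [/set0Pn [k]|[_ Hc]]; last first.
  have := leq_trans Hc (max_card _); rewrite card_ord => H; move: (leq_trans (leqnSn _) H); by rewrite ltnn.
rewrite inE !Fk_mpow // !inE => /andP [/existsP [x /andP [xi /posbP h1]] /existsP [y /andP [yi /posbP h2]]].
move: xi yi h1 h2; rewrite !inE => /eqP -> /eqP ->; by exists k.
Qed.

End Sary.
Lemma fin_argmax (I : finType) (i0 : I) (F : I -> R) : exists im, forall i, F i <= F im.
Proof.
suff: forall s : seq I, exists im, forall i, i \in s -> F i <= F im.
  by move=> /(_ (enum I)) [im H]; exists im => i; apply: H; rewrite mem_enum.
elim => [|x s [im IH]]; first by exists i0.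
case: (Rle_dec (F x) (F im)) => h.
  exists im => i; rewrite inE => /orP [/eqP ->|/IH] //.
exists x => i; rewrite inE => /orP [/eqP ->|/IH]; lra.
Qed.

Lemma fin_argmin (I : finType) (i0 : I) (F : I -> R) : exists im, forall i, F im <= F i.
Proof. have [im H] := fin_argmax i0 (fun i => - F i); exists im => i; have := H i; lra. Qed.

Lemma fin_posmin (I : finType) (F : I -> R) : (forall i, 0 < F i) -> exists e, 0 < e /\ forall i, e <= F i.
Proof.
move=> Hp.
suff: forall s : seq I, exists e, 0 < e /\ forall i, i \in s -> e <= F i.
  by move=> /(_ (enum I)) [e [e0 H]]; exists e; split => // i; apply: H; rewrite mem_enum.
elim => [|x s [e [e0 IH]]]; first by exists 1; split => //; lra.
exists (Rmin (F x) e); split; first by apply: Rmin_pos => //; apply: Hp.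
move=> i; rewrite inE => /orP [/eqP ->|/IH h]; first by apply: Rmin_l.
by apply: Rle_trans (Rmin_r _ _) h.
Qed.

Section Conv.
Variable n : nat.
Implicit Types P T : rmat n.

Definition colv P (x : 'I_n -> R) i := rsum (fun l => P i l * x l).

Lemma conv_bound P x a b : stochastic P -> (forall l, a <= x l <= b) ->
  forall i, a <= colv P x i <= b.
Proof.
move=> [P0 P1] Hx i; split.
  rewrite -(Rmult_1_r a) -(P1 i) rsum_scal; apply: rsum_le => l.
  rewrite Rmult_comm; apply: Rmult_le_compat_l => //; exact: (Hx l).1.
rewrite -(Rmult_1_r b) -(P1 i) rsum_scal; apply: rsum_le => l.
rewrite (Rmult_comm b); apply: Rmult_le_compat_l => //; exact: (Hx l).2.
Qed.

Lemma rsum_const_row T i c : stochastic T -> rsum (fun l => T i l * c) = c.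
Proof.
move=> [_ T1]; rewrite (rsum_ext (g := fun l => c * T i l)); last by move=> l; lra.
by rewrite -rsum_scal T1 Rmult_1_r.
Qed.

Lemma contract T e x a b : stochastic T ->
  (forall i i', exists k, e <= T i k /\ e <= T i' k) -> (forall l, a <= x l <= b) ->
  forall i i', colv T x i - colv T x i' <= (1 - e) * (b - a).
Proof.
move=> HT Hs Hx i i'; have [T0 T1] := HT.
have [k [h1 h2]] := Hs i i'.
have E1 : colv T x i = b - rsum (fun l => T i l * (b - x l)).
  have := rsum_const_row i b HT.
  rewrite /colv => Hb; rewrite -{1}Hb.
  have := rsum_plus (fun l => T i l * (b - x l)) (fun l => T i l * x l).
  rewrite (rsum_ext (f := fun k => T i k * (b - x k) + T i k * x k) (g := fun l => T i l * b)); last by move=> l; lra.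
  lra.
have E2 : colv T x i' = a + rsum (fun l => T i' l * (x l - a)).
  have := rsum_const_row i' a HT.
  rewrite /colv => Ha; rewrite -{1}Ha -rsum_plus; apply: rsum_ext => l; lra.
have G1 : e * (b - x k) <= rsum (fun l => T i l * (b - x l)).
  have t := @rsum_term_le n (fun l => T i l * (b - x l)) k
    (fun l => Rmult_le_pos (T i l) (b - x l) (T0 i l) ltac:(have := Hx l; lra)).
  have u : e * (b - x k) <= T i k * (b - x k) by apply: Rmult_le_compat_r => //; have := Hx k; lra.
  simpl in t; lra.
have G2 : e * (x k - a) <= rsum (fun l => T i' l * (x l - a)).
  have t := @rsum_term_le n (fun l => T i' l * (x l - a)) k
    (fun l => Rmult_le_pos (T i' l) (x l - a) (T0 i' l) ltac:(have := Hx l; lra)).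
  have u : e * (x k - a) <= T i' k * (x k - a) by apply: Rmult_le_compat_r => //; have := Hx k; lra.
  simpl in t; lra.
rewrite E1 E2; nra.
Qed.

Lemma Un_cv_ge0 u l : (forall m, 0 <= u m) -> Un_cv u l -> 0 <= l.
Proof.
move=> H Hc; apply: Rnot_lt_le => hl.
have [N HN] := Hc (- l) ltac:(lra).
have := HN N (le_n N); have := H N; rewrite /Rdist /Rabs; case: Rcase_abs; lra.
Qed.

Lemma Un_cv_bigsum (I : Type) (r : seq I) (u : nat -> I -> R) (c : I -> R) :
  (forall j, Un_cv (fun m => u m j) (c j)) ->
  Un_cv (fun m => \big[Rplus/0]_(j <- r) u m j) (\big[Rplus/0]_(j <- r) c j).
Proof.
move=> H; elim: r => [|x r IH].
  rewrite big_nil => e e0; exists 0%nat => m _; rewrite big_nil /Rdist Rminus_diag Rabs_R0; lra.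
rewrite big_cons.
have := CV_plus _ _ _ _ (H x) IH.
by apply: Un_cv_ext => m; rewrite big_cons.
Qed.

Variables (P : rmat n) (K : nat) (e : R) (i0 : 'I_n).
Hypothesis HP : stochastic P.
Hypothesis e0 : 0 < e.
Hypothesis Hs : forall i i', exists k, e <= mpow P K i k /\ e <= mpow P K i' k.

Lemma e1 : e <= 1.
Proof. have [k [h _]] := Hs i0 i0; apply: Rle_trans h _; exact: stoch_le1 (stoch_mpow K HP). Qed.

Lemma osc_bound j : forall q m, (q * K <= m)%nat ->
  forall i i', Rabs (mpow P m i j - mpow P m i' j) <= (1 - e) ^ q.
Proof.
elim => [|q IH] m Hm i i'.
  have h1 := stoch_le1 i j (stoch_mpow m HP); have h2 := stoch_le1 i' j (stoch_mpow m HP).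
  have h3 := (stoch_mpow m HP).1 i j; have h4 := (stoch_mpow m HP).1 i' j.
  rewrite /= /Rabs; case: Rcase_abs; lra.
have Hm' : m = (K + (m - K))%nat by rewrite subnKC // (leq_trans _ Hm) // mulSn leq_addr.
have Hq : (q * K <= m - K)%nat by rewrite leq_subRL ?mulSn // (leq_trans _ Hm) // mulSn leq_addr.
set x := fun l => mpow P (m - K) l j.
have [imax Hmax] := fin_argmax i0 x.
have [imin Hmin] := fin_argmin i0 x.
have Hx : forall l, x imin <= x l <= x imax by move=> l; split.
have Hd := IH _ Hq imax imin; rewrite -/(x imax) -/(x imin) in Hd.
have E : forall i, mpow P m i j = colv (mpow P K) x i.
  by move=> i1; rewrite Hm' mpow_add.
have ee := e1.
have C1 := contract (stoch_mpow K HP) Hs Hx i i'.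
have C2 := contract (stoch_mpow K HP) Hs Hx i' i.
rewrite !E /= .
have : x imax - x imin <= (1 - e) ^ q by move: Hd; rewrite /Rabs; case: Rcase_abs; lra.
move=> Hd'.
have : (1 - e) * (x imax - x imin) <= (1 - e) * (1 - e) ^ q by apply: Rmult_le_compat_l; lra.
rewrite /Rabs; case: Rcase_abs; lra.
Qed.

Lemma later_bound j m m' d : (m <= m')%nat ->
  (forall i i', Rabs (mpow P m i j - mpow P m i' j) <= d) ->
  forall i, Rabs (mpow P m' i j - mpow P m i j) <= d.
Proof.
move=> Hmm Hd i.
set x := fun l => mpow P m l j.
have [imax Hmax] := fin_argmax i0 x.
have [imin Hmin] := fin_argmin i0 x.
have Hx : forall l, x imin <= x l <= x imax by move=> l; split.
have E : mpow P m' i j = colv (mpow P (m' - m)) x i.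
  by rewrite -{1}(subnK Hmm) mpow_add.
have B := conv_bound (stoch_mpow (m' - m) HP) Hx i.
have D := Hd imax imin; rewrite -/(x imax) -/(x imin) in D.
have Hi := Hx i.
rewrite E -/(x i); move: D; rewrite /Rabs; do 2 case: Rcase_abs; lra.
Qed.

Lemma small_pow eps : 0 < eps -> exists q, (1 - e) ^ q < eps.
Proof.
move=> h; have [|N HN] := pow_lt_1_zero (1 - e) _ eps h.
  have := e1; rewrite /Rabs; case: Rcase_abs; lra.
exists N; have := HN N (le_n N); have := pow_le (1 - e) N ltac:(have := e1; lra).
rewrite /Rabs; case: Rcase_abs; lra.
Qed.

Lemma col_limit j : {l | forall i, Un_cv (fun m => mpow P m i j) l}.
Proof.
have cc : Cauchy_crit (fun m => mpow P m i0 j).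
  move=> eps h; have [q Hq] := @small_pow (eps / 2) ltac:(lra).
  exists (q * K)%nat => a b /leP ha /leP hb.
  have D := osc_bound j (leqnn (q * K)).
  have La := later_bound ha D i0; have Lb := later_bound hb D i0.
  rewrite /Rdist; move: La Lb; rewrite /Rabs; do 3 case: Rcase_abs; lra.
have [l Hl] := R_complete _ cc.
exists l => i eps h.
have [q Hq] := @small_pow (eps / 2) ltac:(lra).
have [N HN] := Hl (eps / 2) ltac:(lra).
exists (maxn N (q * K)) => m /leP Hm.
have D := osc_bound j (leq_trans (leq_maxr N _) Hm) i i0.
have := HN m (leP (leq_trans (leq_maxl _ _) Hm)).
rewrite /Rdist; move: D; rewrite /Rabs; do 3 case: Rcase_abs; lra.
Qed.

Lemma SIA_of_scr : SIA P.
Proof.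
split => //.
exists (fun j => sval (col_limit j)); split.
  move=> j; case: (col_limit j) => l Hl /=.
  apply: (Un_cv_ge0 _ (Hl i0)) => m; exact: (stoch_mpow m HP).1.
split; last by move=> i j; case: (col_limit j) => l Hl /=.
have H := @Un_cv_bigsum _ (index_enum 'I_n) (fun m j => mpow P m i0 j) (fun j => sval (col_limit j))
  (fun j => proj2_sig (col_limit j) i0).
have H1 : Un_cv (fun m => \big[Rplus/0]_(j <- index_enum 'I_n) mpow P m i0 j) 1.
  move=> eps h; exists 0%nat => m _.
  have := (stoch_mpow m HP).2 i0; rewrite /rsum => ->; rewrite /Rdist Rminus_diag Rabs_R0; lra.
exact: (UL_sequence _ _ _ H H1).
Qed.

End Conv.

Lemma sary_SIA n (P : rmat n) (i0 : 'I_n) : stochastic P -> sary P -> SIA P.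
Proof.
move=> HP SP.
have Scr := sary_scr HP SP.
have [e [e0 He]] := @fin_posmin _ (fun p : 'I_n * 'I_n =>
   if posb (mpow P n p.1 p.2) then mpow P n p.1 p.2 else 1)
   ltac:(by move=> [a b] /=; case E: (posb _); [apply/posbP | lra]).
apply: (SIA_of_scr (K := n) (e := e) i0 HP e0).
move=> i i'; have [k [h1 h2]] := Scr i i'; exists k.
have := He (i, k); have := He (i', k); rewrite /=.
by move: h1 h2 => /posbP -> /posbP -> /= ? ?.
Qed.
Local Close Scope R_scope.

Theorem theorem4 (n : nat) (hn : 3 <= n) (l : nat) (hl : largest_sia_index n l) :
  mul_closed (Sk 1 (n:=n)) /\
  (forall k, 2 <= k -> k <= l -> ~ mul_closed (Sk k (n:=n))).
Proof.
pose o0 : 'I_n := Ordinal (leq_trans (isT : 1 <= 3)%nat hn).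
pose o1 : 'I_n := Ordinal (leq_trans (isT : 2 <= 3)%nat hn).
pose o2 : 'I_n := Ordinal hn.
have n01 : (o0 == o1) = false by [].
have n02 : (o0 == o2) = false by [].
have n12 : (o1 == o2) = false by [].
split.
  move=> P Q [r [r0 [r1 VP]]] [r' [r0' [r1' VQ]]].
  have e1 : r = 1%nat by apply/eqP; rewrite eqn_leq r1.
  have e1' : r' = 1%nat by apply/eqP; rewrite eqn_leq r1'.
  subst r r'.
  have HP := VP.1.1; have HQ := VQ.1.1.
  have S := sary_mul HP HQ (Vk1_sary VP) (Vk1_sary VQ).
  have HPQ := stoch_mmul HP HQ.
  exists 1%nat; split => //; split => //; split.
    exact: sary_SIA o0 HPQ S.
  by apply: (@sary_index1 _ _ o0 o1) => //; rewrite n01.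
move=> k k2 kl HC.
pose f := fun x : 'I_n => if x == o2 then o1 else o0.
pose g := fun x : 'I_n => if x == o1 then o0 else o2.
have Vf : Vk 2 (fm f).
  apply: (@V2_fm _ f o0 o1 o2).
    by move=> x; rewrite /f; case: (x == o2); rewrite ?n12 ?n02.
  by rewrite /f n12 eqxx n01.
have Vg : Vk 2 (fm g).
  apply: (@V2_fm _ g o2 o1 o0).
    by move=> x; rewrite /g; case: (x == o1).
  by [].
have := HC (fm f) (fm g) (ex_intro _ 2%nat (conj isT (conj k2 Vf)))
  (ex_intro _ 2%nat (conj isT (conj k2 Vg))).
rewrite mmul_fm => [[r [_ [_ [HS _]]]]].
apply: (@notSIA_fm _ (g \o f) o0 _ _ HS).
  by [].
by [].
Qed.
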